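(* Let $U_n\in(\mathcal{V}_0)^N\cap\mathcal{M}_{\leqslant}^{N;N_g}$ be an iterate of the quasi-orthogonal scheme described in the context, with step size $s_n<\frac{2}{|\lambda_1-\lambda_{\max}|}$, and let $U_{n+1}$ be produced from $U_n$ by one step of that scheme. Then the components of $U_{n+1}$ are linearly independent, i.e. $U_{n+1}^\top U_{n+1}>0$.
   Context: Let $\mathcal{V}^{N_g}$ be a real Hilbert space of finite dimension $N_g$ with inner product $(\cdot,\cdot)$ (in the paper a finite element subspace of $H_0^1(\Omega)$ with the $L^2(\Omega)$ inner product), and let $H:\mathcal{V}^{N_g}\to\mathcal{V}^{N_g}$ be a self-adjoint linear operator with smallest eigenvalue $\lambda_1$ and largest eigenvalue $\lambda_{\max}$; it is assumed that $\lambda_1<0$. Fix $N\in\mathbb{N}_+$. Elements of $(\mathcal{V}^{N_g})^N$ are written $U=(u_1,\dots,u_N)$; $U^\top V=((u_i,v_j))_{i,j=1}^N$; for a real $N\times N$ matrix $A=(a_{kj})$, $UA$ is the element whose $j$-th component is $\sum_k a_{kj}u_k$; $HU=(Hu_1,\dots,Hu_N)$. For symmetric matrices, $A\leqslant B$ means $B-A$ is positive semidefinite and $A>0$ means positive definite. Set $\nabla E(U)=HU$. For $U\in(\mathcal{V}^{N_g})^N$, $\mathcal{A}_U=\nabla E(U)U^\top-U\nabla E(U)^\top$ is the linear operator on $\mathcal{V}^{N_g}$ given by $\mathcal{A}_Uw=\sum_{i=1}^N\big(Hu_i\,(u_i,w)-u_i\,(Hu_i,w)\big)$, applied componentwise to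 elements of $(\mathcal{V}^{N_g})^N$. The quasi-Stiefel set is $\mathcal{M}_{\leqslant}^{N;N_g}=\{U:0<U^\top U\leqslant I_N\}$. Quasi-orthogonal scheme: given step sizes $s_n>0$ with $\sum_n s_n=+\infty$ and initial data $U_0$, $\hat U_{n+1}$ satisfies $\hat U_{n+1}=U_n-s_n\mathcal{A}_{\tilde U_{n+\frac12}}\tilde U_{n+\frac12}$ with $\tilde U_{n+\frac12}=\frac{U_n+\hat U_{n+1}}{2}$, and $U_{n+1}=\hat U_{n+1}-s_n\nabla E(\hat U_{n+1})(I_N-\hat U_{n+1}^\top\hat U_{n+1})$. For $j=1,\dots,N$, let $\mathcal{V}_{0_j}=\operatorname{span}\{v_{j,1},\dots,v_{j,d_j}\}$ ($d_j\geqslant1$) with each $v_{j,k}$ an eigenvector of $H$, and $(\mathcal{V}_0)^N=\mathcal{V}_{0_1}\times\cdots\times\mathcal{V}_{0_N}$. Let $\lambda_{\max}^0=\max_{j,k}\frac{(v_{j,k},Hv_{j,k})}{(v_{j,k},v_{j,k})}$. Standing assumption: $\lambda_{\max}^0\leqslant 0$. *)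

(* Defs.v *)
(* The finite-dimensional real Hilbert space V^{N_g} is
   modelled as column vectors 'cV[R]_Ng with the general inner product
   (u,v) = u^T M v, M symmetric positive definite (Gram matrix of a basis).
   An element U = (u_1,...,u_N) of (V^{N_g})^N is an Ng x N matrix whose
   j-th column is u_j. *)
From HB Require Import structures.
From mathcomp Require Import all_boot all_order all_algebra.
Set Implicit Arguments. Unset Strict Implicit. Unset Printing Implicit Defensive.
Import Order.TTheory GRing.Theory Num.Theory.
Local Open Scope ring_scope.

Section Defs.
Variable R : rcfType.

Definition symmx n (A : 'M[R]_n) : Prop := A^T = A.
Definition psdmx n (A : 'M[R]_n) : Prop :=
  symmx A /\ forall x : 'cV[R]_n, 0 <= (x^T *m A *m x) 0 0.
Definition pdmx n (A : 'M[R]_n) : Prop :=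
  symmx A /\ forall x : 'cV[R]_n, x != 0 -> 0 < (x^T *m A *m x) 0 0.
Definition lemx n (A B : 'M[R]_n) : Prop := psdmx (B - A).

Definition ip Ng (M : 'M[R]_Ng) (u v : 'cV[R]_Ng) : R := (u^T *m M *m v) 0 0.
(* U^T V = ((u_i, v_j))_{ij} *)
Definition gram Ng N (M : 'M[R]_Ng) (U V : 'M[R]_(Ng, N)) : 'M[R]_N :=
  U^T *m M *m V.

Definition selfadj Ng (M H : 'M[R]_Ng) : Prop :=
  forall u v : 'cV[R]_Ng, ip M (H *m u) v = ip M u (H *m v).

Definition is_eigenvalue Ng (H : 'M[R]_Ng) (a : R) : Prop :=
  exists v : 'cV[R]_Ng, v != 0 /\ H *m v = a *: v.
Definition is_eigenvector Ng (H : 'M[R]_Ng) (v : 'cV[R]_Ng) : Prop :=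
  v != 0 /\ exists a : R, H *m v = a *: v.

Definition smallest_eigenvalue Ng (H : 'M[R]_Ng) (lam : R) : Prop :=
  is_eigenvalue H lam /\ forall a, is_eigenvalue H a -> lam <= a.
Definition largest_eigenvalue Ng (H : 'M[R]_Ng) (lam : R) : Prop :=
  is_eigenvalue H lam /\ forall a, is_eigenvalue H a -> a <= lam.

Definition gradE Ng N (H : 'M[R]_Ng) (U : 'M[R]_(Ng, N)) : 'M[R]_(Ng, N) :=
  H *m U.

(* A_U w = sum_i (H u_i (u_i,w) - u_i (H u_i,w)), as an operator on V *)
Definition AU Ng N (M H : 'M[R]_Ng) (U : 'M[R]_(Ng, N)) : 'M[R]_Ng :=
  gradE H U *m U^T *m M - U *m (gradE H U)^T *m M.

Definition quasi_stiefel Ng N (M : 'M[R]_Ng) (U : 'M[R]_(Ng, N)) : Prop :=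
  pdmx (gram M U U) /\ lemx (gram M U U) 1%:M.

Definition in_V0N Ng N (d : 'I_N -> nat)
    (v : forall j : 'I_N, 'I_(d j) -> 'cV[R]_Ng) (U : 'M[R]_(Ng, N)) : Prop :=
  forall j : 'I_N, exists c : 'I_(d j) -> R,
    col j U = \sum_(k < d j) c k *: v j k.

(* one step of the quasi-orthogonal scheme: Uh is \hat U_{n+1} (defined
   implicitly), U1 is U_{n+1} *)
Definition qo_step Ng N (M H : 'M[R]_Ng) (s : R)
    (U Uh U1 : 'M[R]_(Ng, N)) : Prop :=
  let Ut := (2%:R)^-1 *: (U + Uh) in
  Uh = U - s *: (AU M H Ut *m Ut) /\
  U1 = Uh - s *: (gradE H Uh *m (1%:M - gram M Uh Uh)).

End Defs.

(* Main.v *)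
Require Import Defs.
From HB Require Import structures.
From mathcomp Require Import all_boot all_order all_algebra.
From mathcomp Require Import sesquilinear spectral.
From mathcomp Require Import complex.
From mathcomp Require Import ring lra.
From Stdlib Require Import ClassicalEpsilon.
Import Order.TTheory GRing.Theory Num.Theory Num.Def.
Local Open Scope ring_scope.
Set Implicit Arguments. Unset Strict Implicit. Unset Printing Implicit Defensive.

Section Real.
Variable R : rcfType.

Lemma ipDl n (P : 'M[R]_n) a b c : ip P (a + b) c = ip P a c + ip P b c.
Proof. by rewrite /ip linearD /= !mulmxDl mxE. Qed.
Lemma ipDr n (P : 'M[R]_n) a b c : ip P c (a + b) = ip P c a + ip P c b.
Proof. by rewrite /ip mulmxDr mxE. Qed.
Lemma ipZl n (P : 'M[R]_n) t a b : ip P (t *: a) b = t * ip P a b.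
Proof. by rewrite /ip linearZ /= -!scalemxAl mxE. Qed.
Lemma ipZr n (P : 'M[R]_n) t a b : ip P a (t *: b) = t * ip P a b.
Proof. by rewrite /ip -scalemxAr mxE. Qed.
Lemma ipNl n (P : 'M[R]_n) a b : ip P (- a) b = - ip P a b.
Proof. by rewrite -scaleN1r ipZl mulN1r. Qed.
Lemma ipNr n (P : 'M[R]_n) a b : ip P a (- b) = - ip P a b.
Proof. by rewrite -scaleN1r ipZr mulN1r. Qed.
Lemma ipBl n (P : 'M[R]_n) a b c : ip P (a - b) c = ip P a c - ip P b c.
Proof. by rewrite ipDl ipNl. Qed.
Lemma ipBr n (P : 'M[R]_n) a b c : ip P c (a - b) = ip P c a - ip P c b.
Proof. by rewrite ipDr ipNr. Qed.
Lemma ip0l n (P : 'M[R]_n) b : ip P 0 b = 0.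
Proof. by rewrite /ip linear0 !mul0mx mxE. Qed.
Lemma ip0r n (P : 'M[R]_n) b : ip P b 0 = 0.
Proof. by rewrite /ip mulmx0 mxE. Qed.
Lemma ip_suml n (P : 'M[R]_n) (I : finType) (f : I -> 'cV_n) b :
  ip P (\sum_i f i) b = \sum_i ip P (f i) b.
Proof. exact: (big_morph (fun u => ip P u b) (fun x y => ipDl P x y b) (ip0l P b)). Qed.
Lemma ip_sumr n (P : 'M[R]_n) (I : finType) (f : I -> 'cV_n) b :
  ip P b (\sum_i f i) = \sum_i ip P b (f i).
Proof. exact: (big_morph (fun u => ip P b u) (fun x y => ipDr P x y b) (ip0r P b)). Qed.
Lemma ip_sym n (P : 'M[R]_n) a b : P^T = P -> ip P a b = ip P b a.
Proof.
move=> Ps; rewrite /ip -[in LHS](trmxK (a^T *m P *m b)) mxE.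
by rewrite !trmx_mul trmxK Ps mulmxA.
Qed.
Lemma ip_mul n m (P : 'M[R]_n) (A B : 'M[R]_(n, m)) x y :
  ip P (A *m x) (B *m y) = ip (A^T *m P *m B) x y.
Proof. by rewrite /ip trmx_mul !mulmxA. Qed.

Lemma xtx_gt0 n (x : 'cV[R]_n) : x != 0 -> 0 < (x^T *m x) 0 0.
Proof.
move=> x0; rewrite mxE lt0r sumr_ge0 ?andbT; last by move=> i _; rewrite mxE -expr2 sqr_ge0.
apply: contra x0; rewrite psumr_eq0; last by move=> i _; rewrite mxE -expr2 sqr_ge0.
move/allP => H; apply/eqP/matrixP => i j; rewrite (ord1 j) mxE.
by have := H i (mem_index_enum _); rewrite mxE -expr2 sqrf_eq0 => /eqP.
Qed.

Lemma ip1 n (x : 'cV[R]_n) : ip 1%:M x x = (x^T *m x) 0 0.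
Proof. by rewrite /ip mulmx1. Qed.

Lemma ip_CS n (P : 'M[R]_n) a b : P^T = P -> (forall z, 0 <= ip P z z) ->
  ip P a b ^+ 2 <= ip P a a * ip P b b.
Proof.
move=> Ps Pp.
have q t : 0 <= ip P a a + 2%:R * t * ip P a b + t ^+ 2 * ip P b b.
  have := Pp (a + t *: b); rewrite !ipDl !ipDr !ipZl !ipZr (ip_sym b a Ps).
  by congr (0 <= _); ring.
move: q; set A := ip P a a; set B := ip P a b; set Cc := ip P b b => q.
have C0 : 0 <= Cc by exact: Pp.
have A0 : 0 <= A by exact: Pp.
have [c0|cn0] := eqVneq Cc 0.
  have [b0|bn0] := eqVneq B 0; first by rewrite b0 c0 expr0n mulr0.
  have := q (- (A + 1) / (2%:R * B)); rewrite c0 mulr0 addr0.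
  have -> : 2%:R * (- (A + 1) / (2%:R * B)) * B = - (A + 1).
    by field.
  lra.
have Cp : 0 < Cc by rewrite lt0r cn0.
have := q (- B / Cc).
have -> : A + 2%:R * (- B / Cc) * B + (- B / Cc) ^+ 2 * Cc = A - B ^+ 2 / Cc.
  by field.
rewrite subr_ge0 => h.
have -> : B ^+ 2 = B ^+ 2 / Cc * Cc by rewrite divfK.
by rewrite ler_wpM2r // ltW.
Qed.

Lemma ip_ker n (P : 'M[R]_n) x : P^T = P -> (forall z, 0 <= ip P z z) ->
  ip P x x = 0 -> P *m x = 0.
Proof.
move=> Ps Pp x0; have := ip_CS (P *m x) x Ps Pp; rewrite x0 mulr0.
have -> : ip P (P *m x) x = ((P *m x)^T *m (P *m x)) 0 0.
  by rewrite /ip -mulmxA.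
move=> h; apply/eqP; apply: contraT => hn.
have := xtx_gt0 hn; set t := (_ 0 0) in h * => tp.
have : 0 < t ^+ 2 by rewrite exprn_gt0.
by rewrite ltNge h.
Qed.


Lemma ipMB n (A B : 'M[R]_n) x y : ip (A - B) x y = ip A x y - ip B x y.
Proof. by rewrite /ip mulmxBr mulmxBl !mxE. Qed.

Lemma psd_SmS n (S : 'M[R]_n) : S^T = S -> (forall z, 0 <= ip S z z) ->
  (forall z, 0 <= ip (1%:M - S) z z) -> forall x, 0 <= ip (S - S *m S) x x.
Proof.
move=> Ss Sp S1 x; rewrite ipMB.
have e1 : ip (S *m S) x x = ip 1%:M (S *m x) (S *m x).
  by rewrite ip_mul mulmx1 Ss.
have e2 : ip S x (S *m x) = ip 1%:M (S *m x) (S *m x).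
  by rewrite -e1 /ip !mulmxA.
have h3 : ip S (S *m x) (S *m x) <= ip 1%:M (S *m x) (S *m x).
  by rewrite -subr_ge0 -ipMB.
have := ip_CS x (S *m x) Ss Sp; rewrite e1 e2.
have h4 := Sp x; have h5 := Sp (S *m x).
have h6 : 0 <= ip 1%:M (S *m x) (S *m x).
  by rewrite ip1; have [->|/xtx_gt0/ltW //] := eqVneq (S *m x) 0; rewrite trmx0 mul0mx mxE.
move=> h; rewrite subr_ge0; nra.
Qed.

Lemma neg_span n (M H : 'M[R]_n) (I : finType) (w : I -> 'cV_n) (a g : I -> R) :
  M^T = M -> (forall z, 0 <= ip M z z) -> selfadj M H ->
  (forall p, H *m w p = a p *: w p) -> (forall p, a p <= 0) ->
  ip M (\sum_p g p *: w p) (H *m \sum_p g p *: w p) <= 0.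
Proof.
move=> Ms Mp sa Hw an.
pose e p := Num.sqrt (- a p).
have key p q : ip M (w p) (w q) * a q = - (e p * e q * ip M (w p) (w q)).
  have h : a p * ip M (w p) (w q) = a q * ip M (w p) (w q).
    by have := sa (w p) (w q); rewrite !Hw ipZl ipZr.
  have [->|nz] := eqVneq (ip M (w p) (w q)) 0; first by rewrite !mulr0 mul0r oppr0.
  have apq := mulIf nz h.
  have ee : e p * e q = - a q.
    by rewrite /e apq -expr2 sqr_sqrtr // oppr_ge0.
  by rewrite ee; ring.
have -> : H *m (\sum_p g p *: w p) = \sum_p (g p * a p) *: w p.
  rewrite mulmx_sumr; apply: eq_bigr => p _.
  by rewrite -scalemxAr Hw scalerA.
have E1 : ip M (\sum_p g p *: w p) (\sum_q (g q * a q) *: w q) =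
    \sum_p \sum_q g p * g q * (ip M (w p) (w q) * a q).
  rewrite ip_suml; apply: eq_bigr => p _; rewrite ipZl ip_sumr mulr_sumr.
  by apply: eq_bigr => q _; rewrite ipZr; ring.
pose z := \sum_p (g p * e p) *: w p.
have E2 : ip M z z = \sum_p \sum_q g p * g q * (e p * e q * ip M (w p) (w q)).
  rewrite ip_suml; apply: eq_bigr => p _; rewrite ipZl ip_sumr mulr_sumr.
  by apply: eq_bigr => q _; rewrite ipZr; ring.
rewrite E1.
have -> : \sum_p \sum_q g p * g q * (ip M (w p) (w q) * a q) = - ip M z z.
  rewrite E2 -sumrN; apply: eq_bigr => p _; rewrite -sumrN; apply: eq_bigr => q _.
  by rewrite key; ring.
by rewrite oppr_le0.
Qed.

End Real.

Section Cx.
Local Open Scope sesquilinear_scope.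
Variable R : rcfType.
Local Notation C := (R[i]).
Local Notation rc := (real_complex R).
Local Notation cx A := (map_mx rc A).

Lemma rc_real (x : R) : rc x \is Num.real.
Proof. by rewrite realE !lecR le_total. Qed.
Lemma conj_rc (x : R) : conjC (rc x) = rc x.
Proof. exact/conj_Creal/rc_real. Qed.

Lemma cx_realmx m n (A : 'M[R]_(m, n)) : cx A \is a realmx.
Proof. by apply/mxOverP => i j; rewrite mxE rc_real. Qed.

Lemma cx_tc m n (A : 'M[R]_(m, n)) : (cx A)^t* = cx (A^T).
Proof. by apply/matrixP => i j; rewrite !mxE conj_rc. Qed.

Lemma tcM m n p (A : 'M[C]_(m, n)) (B : 'M[C]_(n, p)) : (A *m B)^t* = B^t* *m A^t*.
Proof. by rewrite trmx_mul map_mxM. Qed.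

Lemma unitary_l n (P : 'M[C]_n) : P \is unitarymx -> P^t* *m P = 1%:M.
Proof. by move/unitarymxP/mulmx1C. Qed.

Lemma herm_spectral n (A : 'M[C]_n) : A \is hermsymmx ->
  exists P (a : 'rV[R]_n), P \is unitarymx /\ A = P^t* *m diag_mx (cx a) *m P.
Proof.
move=> Ah; have /orthomx_spectralP := hermitian_normalmx Ah.
have Pu := spectral_unitarymx A.
have dr := hermitian_spectral_diag_real Ah.
rewrite invmx_unitary // => E.
exists (spectralmx A), (map_mx (@complex.Re R) (spectral_diag A)); split => //.
rewrite [LHS]E; congr (_ *m diag_mx _ *m _).
apply/matrixP => i j; rewrite !mxE complexRe.
by apply/esym/Creal_ReP; move/mxOverP: dr; apply.
Qed.

Lemma cx_sym_herm n (A : 'M[R]_n) : A^T = A -> cx A \is hermsymmx.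
Proof.
move=> As; apply/is_hermitianmxP; rewrite expr0 scale1r cx_tc As //.
Qed.

Lemma cx_inj m n : injective (fun A : 'M[R]_(m, n) => cx A).
Proof. apply: map_mx_inj; exact: complexI. Qed.

Lemma eig_extract n (Hr : 'M[R]_n) (F : 'M[C]_n) (a : 'rV[R]_n) k :
  F \in unitmx -> cx Hr = invmx F *m diag_mx (cx a) *m F ->
  exists2 x : 'cV[R]_n, x != 0 & Hr *m x = a 0 k *: x.
Proof.
move=> Fu E.
pose e : 'cV[C]_n := delta_mx k 0.
pose z := invmx F *m e.
have De : diag_mx (cx a) *m e = rc (a 0 k) *: e.
  apply/matrixP => i j; rewrite mul_diag_mx !mxE.
  case: eqP => [->//|_] /=; by rewrite !mulr0.
have Ez : cx Hr *m z = rc (a 0 k) *: z.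
  by rewrite /z mulmxA E mulmxK // -mulmxA De scalemxAr.
have z0 : z != 0.
  apply/eqP => z0; have : F *m z = e by rewrite /z mulmxA mulmxV // mul1mx.
  rewrite z0 mulmx0 => /matrixP /(_ k 0); rewrite !mxE !eqxx => /eqP.
  by rewrite eq_sym oner_eq0.
pose x := map_mx (@complex.Re R) z; pose y := map_mx (@complex.Im R) z.
have zE : z = cx x + 'i *: cx y.
  by apply/matrixP => i j; rewrite !mxE -complexiE [LHS]complexE mulrC.
have : cx (Hr *m x) + 'i *: cx (Hr *m y) = cx (a 0 k *: x) + 'i *: cx (a 0 k *: y).
  rewrite !map_mxM !map_mxZ scalemxAr -mulmxDr -zE Ez zE scalerDr.
  by rewrite !scalerA mulrC.
move/eqmx_ReiIm; rewrite !cx_realmx => /(_ isT isT isT isT) [] /cx_inj E1 /cx_inj E2.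
have [x0|xn0] := eqVneq x 0; last by exists x.
exists y => //; apply: contraNneq z0 => y0; by rewrite zE x0 y0 !map_mx0 scaler0 addr0.
Qed.


Lemma simul_diag n (M B : 'M[R]_n) : M^T = M ->
  (forall x : 'cV_n, x != 0 -> 0 < (x^T *m M *m x) 0 0) -> B^T = B ->
  exists F (a : 'rV[R]_n), [/\ F \in unitmx, cx M = F^t* *m F &
     cx B = F^t* *m diag_mx (cx a) *m F].
Proof.
move=> Ms Mpd Bs.
have [P0 [m [P0u EM]]] := herm_spectral (cx_sym_herm Ms).
have mpos : forall k, 0 < m 0 k.
  move=> k; have [|x x0 Mx] := @eig_extract n M P0 m k (unitarymx_unit P0u).
    by rewrite invmx_unitary.
  have := Mpd x x0; rewrite -mulmxA Mx -scalemxAr mxE => H.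
  by rewrite -(pmulr_lgt0 _ (xtx_gt0 x0)).
pose sq := \row_k Num.sqrt (m 0 k).
pose T0 := diag_mx (cx sq) *m P0.
have T0u : T0 \in unitmx.
  rewrite unitmx_mul (unitarymx_unit P0u) andbT unitmxE det_diag unitfE.
  apply/prodf_neq0 => i _; rewrite !mxE.
  by rewrite fmorph_eq0 sqrtr_eq0 -ltNge mpos.
have ET0 : T0^t* *m T0 = cx M.
  rewrite tcM /T0 -map_diag_mx cx_tc tr_diag_mx mulmxA -(mulmxA _ _ (cx _)).
  rewrite -map_mxM mulmx_diag EM; congr (_ *m _ *m _).
  rewrite -map_diag_mx; congr (cx (diag_mx _)); apply/matrixP => i j.
  by rewrite !mxE (ord1 i) -expr2 sqr_sqrtr // ltW.
pose A := (invmx T0)^t* *m cx B *m invmx T0.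
have Ah : A \is hermsymmx.
  apply/is_hermitianmxP; rewrite expr0 scale1r /A !tcM trmxCK cx_tc Bs.
  by rewrite mulmxA.
have [P [a [Pu EA]]] := herm_spectral Ah.
exists (P *m T0), a; split.
- by rewrite unitmx_mul (unitarymx_unit Pu) T0u.
- by rewrite tcM -mulmxA (mulmxA (P^t*)) unitary_l // mul1mx ET0.
rewrite tcM.
have -> : T0^t* *m P^t* *m diag_mx (cx a) *m (P *m T0) = T0^t* *m A *m T0.
  by rewrite EA !mulmxA.
by rewrite /A mulmxA -(mulmxA _ (invmx T0)) mulVmx // mulmx1 mulmxA -tcM mulVmx // trmx1 map_mx1 mul1mx.
Qed.


Lemma quad_diag n (q : 'cV[C]_n) (a : 'rV[R]_n) (c : R) :
  (q^t* *m diag_mx (cx a) *m q) 0 0 - rc c * (q^t* *m q) 0 0 =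
  \sum_k rc (a 0 k - c) * (q k 0 * conjC (q k 0)).
Proof.
rewrite !mxE mulr_sumr -sumrB; apply: eq_bigr => k _.
rewrite mul_mx_diag !mxE rmorphB /=.
by rewrite mulrBl; congr (_ - _); rewrite ![_ * (q k 0)]mulrC ?mulrA // mulrC mulrA.
Qed.

Lemma mx_eq_quad n (A B : 'M[R]_n) :
  (forall u v : 'cV_n, (u^T *m A *m v) 0 0 = (u^T *m B *m v) 0 0) -> A = B.
Proof.
move=> E; apply/matrixP => i j; have := E (delta_mx i 0) (delta_mx j 0).
by rewrite trmx_delta -!rowE -!colE !mxE.
Qed.

Lemma H_facts n (M H : 'M[R]_n) lam1 lammax :
  pdmx M -> selfadj M H -> smallest_eigenvalue H lam1 -> largest_eigenvalue H lammax ->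
  [/\ (forall u, lam1 * ip M u u <= ip M u (H *m u)),
      (forall u, ip M u (H *m u) <= lammax * ip M u u) &
      exists F (a : 'rV[R]_n), [/\ F \in unitmx,
         cx H = invmx F *m diag_mx (cx a) *m F &
         forall k, lam1 <= a 0 k <= lammax]].
Proof.
move=> [Ms Mpd] sa [_ l1min] [_ lmmax].
have MH : H^T *m M = M *m H.
  apply: mx_eq_quad => u v; have := sa u v; rewrite /ip.
  by rewrite trmx_mul !mulmxA.
have MHs : (M *m H)^T = M *m H by rewrite trmx_mul Ms.
have [F [a [Fu EM EB]]] := simul_diag Ms Mpd MHs.
have Ftu : F^t* \in unitmx by rewrite map_unitmx unitmx_tr.
have EH : cx H = invmx F *m diag_mx (cx a) *m F.
  have : F^t* *m (F *m cx H) = F^t* *m (diag_mx (cx a) *m F).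
    by rewrite mulmxA -EM -map_mxM mulmxA -EB.
  move/(canLR (mulKmx Ftu)); rewrite mulKmx // => E.
  by rewrite -mulmxA -E mulKmx.
have abnd : forall k, lam1 <= a 0 k <= lammax.
  move=> k; have [x x0 Hx] := eig_extract k Fu EH.
  by rewrite l1min ?lmmax //; exists x.
have key : forall u c, rc (ip M u (H *m u)) - rc c * rc (ip M u u) =
    \sum_k rc (a 0 k - c) * ((F *m cx u) k 0 * conjC ((F *m cx u) k 0)).
  move=> u c; rewrite -quad_diag /ip.
  have -> : rc ((u^T *m M *m (H *m u)) 0 0) = (cx (u^T *m (M *m H) *m u)) 0 0.
    by rewrite [RHS]mxE !mulmxA.
  have -> : rc ((u^T *m M *m u) 0 0) = (cx (u^T *m M *m u)) 0 0 by rewrite [RHS]mxE.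
  rewrite !map_mxM -[cx M *m cx H]map_mxM EB EM -cx_tc !tcM !mulmxA //.
split => //; last by exists F, a.
- move=> u; rewrite -subr_ge0 -ler0c rmorphB rmorphM /= key.
  apply: sumr_ge0 => k _; apply: mulr_ge0; last exact: mul_conjC_ge0.
  by rewrite ler0c subr_ge0; case/andP: (abnd k).
- move=> u; rewrite -subr_ge0 -ler0c rmorphB rmorphM /=.
  rewrite -opprB key -sumrN; apply: sumr_ge0 => k _; rewrite -mulNr -rmorphN opprB.
  apply: mulr_ge0; last exact: mul_conjC_ge0.
  by rewrite ler0c subr_ge0; case/andP: (abnd k).
Qed.

Lemma Tinj_lemma Ng N (H : 'M[R]_Ng) (F : 'M[C]_Ng) (a : 'rV[R]_Ng)
    (G K : 'M[R]_N) (c : R) (X : 'M[R]_(Ng, N)) :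
  F \in unitmx -> cx H = invmx F *m diag_mx (cx a) *m F ->
  (forall k, (1%:M + c *: (a 0 k *: G - K)) \in unitmx) ->
  X + c *: (H *m X *m G - X *m K) = 0 -> X = 0.
Proof.
move=> Fu EH Nu E.
have FH : F *m cx H = diag_mx (cx a) *m F by rewrite EH !mulmxA mulmxV // mul1mx.
have EY : F *m cx X + rc c *: (diag_mx (cx a) *m (F *m cx X) *m cx G - (F *m cx X) *m cx K) = 0.
  have := congr1 (fun A => F *m cx A) E; rewrite map_mx0 mulmx0 => <-.
  rewrite !(map_mxD, map_mxN, map_mxZ, map_mxM) mulmxDr -scalemxAr mulmxDr mulmxN !mulmxA FH.
  by [].
have Y0 : F *m cx X = 0.
  apply/row_matrixP => k; rewrite row0.
  have := congr1 (row k) EY; rewrite row0 => Hk.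
  have : row k (F *m cx X) *m cx (1%:M + c *: (a 0 k *: G - K)) = 0.
    rewrite -Hk !(map_mxD, map_mxB, map_mxZ, map_mx1) mulmxDr mulmx1.
    rewrite !(linearD, linearZ, linearN) /= !row_mul row_diag_mx.
    by rewrite map_mxN mulmxN [(cx a) 0 k]mxE -!scalemxAl -rowE row_mul.
  move/(congr1 (mulmx^~ (invmx (cx (1%:M + c *: (a 0 k *: G - K)))))).
  by rewrite mul0mx mulmxK // map_unitmx.
apply: cx_inj; rewrite map_mx0.
by have := congr1 (mulmx (invmx F)) Y0; rewrite mulKmx // mulmx0.
Qed.

End Cx.



Lemma pd_unit {R : rcfType} n (A : 'M[R]_n) :
  (forall r : 'rV_n, r != 0 -> 0 < (r *m A *m r^T) 0 0) -> A \in unitmx.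
Proof.
move=> Ap; rewrite -row_free_unit -kermx_eq0; apply/negPn/negP => kn0.
have r0 : nz_row (kermx A) != 0 by rewrite nz_row_eq0.
have rA : nz_row (kermx A) *m A = 0 by apply/sub_kermxP; exact: nz_row_sub.
by have := Ap _ r0; rewrite rA mul0mx mxE ltxx.
Qed.

Lemma selfadj_mx {R : rcfType} n (M H : 'M[R]_n) : selfadj M H -> H^T *m M = M *m H.
Proof.
move=> sa; apply: mx_eq_quad => u v; have := sa u v; rewrite /ip.
by rewrite trmx_mul !mulmxA.
Qed.

Lemma ipMD {R : rcfType} n (A B : 'M[R]_n) x y : ip (A + B) x y = ip A x y + ip B x y.
Proof. by rewrite /ip mulmxDr mulmxDl !mxE. Qed.
Lemma ipMZ {R : rcfType} n (A : 'M[R]_n) t x y : ip (t *: A) x y = t * ip A x y.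
Proof. by rewrite /ip -scalemxAr -scalemxAl mxE. Qed.

Lemma zmod_aux (V : zmodType) (x y p q r t : V) :
  (x - y) + ((p - q) - (r - t)) = (x + (p - r)) - (y + (q - t)).
Proof.
rewrite !opprD !opprK !addrA; congr (_ + _).
rewrite -!addrA; congr (_ + _); rewrite addrC -!addrA; congr (_ + _).
by rewrite addrC -!addrA; congr (_ + _); rewrite addrC.
Qed.

Unset Implicit Arguments.
Theorem lemma3p3 (R : rcfType) (Ng N : nat)
    (M : 'M[R]_Ng) (H : 'M[R]_Ng) (lam1 lammax : R)
    (d : 'I_N -> nat) (v : forall j : 'I_N, 'I_(d j) -> 'cV[R]_Ng)
    (s : R) (U Uh U1 : 'M[R]_(Ng, N)) :
  (* inner product: M symmetric positive definite *)
  pdmx M ->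
  (* H self-adjoint with smallest eigenvalue lam1 < 0 and largest lammax *)
  selfadj M H ->
  smallest_eigenvalue H lam1 -> largest_eigenvalue H lammax ->
  lam1 < 0 ->
  (* the spaces V_{0_j}: d_j >= 1, each v_{j,k} an eigenvector of H *)
  (forall j, (1 <= d j)%N) ->
  (forall j k, is_eigenvector H (v j k)) ->
  (* standing assumption lambda_max^0 <= 0 *)
  (forall j k, ip M (v j k) (H *m v j k) / ip M (v j k) (v j k) <= 0) ->
  (* U_n in (V_0)^N cap M_<= *)
  in_V0N v U -> quasi_stiefel M U ->
  (* step size 0 < s_n < 2 / |lam1 - lammax| *)
  0 < s -> s * `|lam1 - lammax| < 2%:R ->
  (* U_{n+1} produced from U_n by one step of the scheme *)
  qo_step M H s U Uh U1 ->
  pdmx (gram M U1 U1).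

Proof.
move=> hM hsa hsm hlm hl1 hd hev hneg hU hqs hs hstep hqo.
have [Ms Mpd] := hM.
have Mp : forall z, 0 <= ip M z z.
  by move=> z; have [->|/Mpd/ltW //] := eqVneq z 0; rewrite ip0l.
have MH := selfadj_mx hsa.
have [ray1 ray2 [F [a [Fu EH abnd]]]] := H_facts hM hsa hsm hlm.
move: hqo => /= [hUh hU1].
set Ut := (2%:R^-1 *: (U + Uh)) in hUh.
set Z := AU M H Ut *m Ut in hUh.
set G := gram M Ut Ut.
set K := Ut^T *m M *m H *m Ut.
have EZ : Z = H *m Ut *m G - Ut *m K.
  rewrite /Z /AU /gradE /G /gram /K mulmxBl.
  congr (_ - _); first by rewrite !mulmxA.
  by rewrite trmx_mul !mulmxA -[_ *m H^T *m M]mulmxA MH !mulmxA.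
have EU : U = Ut + (s / 2%:R) *: Z.
  apply/matrixP => i j; move/matrixP: (hUh) => /(_ i j).
  rewrite /Ut !mxE => h; lra.
have EUh : Uh = Ut - (s / 2%:R) *: Z.
  apply/matrixP => i j; move/matrixP: (hUh) => /(_ i j).
  rewrite /Ut !mxE => h; lra.
clearbody Ut.
have GT : G^T = G by rewrite /G /gram !trmx_mul trmxK Ms mulmxA.
have KT : K^T = K.
  by rewrite /K !trmx_mul trmxK Ms !mulmxA -[_ *m H^T *m M]mulmxA MH !mulmxA.
have skew : Ut^T *m M *m Z + Z^T *m M *m Ut = 0.
  have e1 : Ut^T *m M *m (H *m Ut *m G) = K *m G by rewrite /K !mulmxA.
  have e2 : Ut^T *m M *m (Ut *m K) = G *m K by rewrite /G /gram !mulmxA.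
  have e3 : (H *m Ut *m G)^T *m M *m Ut = G *m K.
    rewrite [(H *m Ut *m G)^T]trmx_mul GT trmx_mul /K !mulmxA; congr (_ *m _).
    by rewrite -[_ *m H^T *m M]mulmxA MH !mulmxA.
  have e4 : (Ut *m K)^T *m M *m Ut = K *m G.
    by rewrite [(Ut *m K)^T]trmx_mul KT /G /gram !mulmxA.
  rewrite EZ mulmxBr linearB /= !mulmxBl e1 e2 e3 e4.
  by rewrite addrC addrA subrK subrr.
have sk' : Ut^T *m M *m Z = - (Z^T *m M *m Ut).
  by apply/eqP; rewrite -addr_eq0 skew.
have gram_pm t : gram M (Ut + t *: Z) (Ut + t *: Z) = G + (t * t) *: (Z^T *m M *m Z).
  rewrite /gram !(linearD, linearZ) /= !mulmxDl -!scalemxAl !(linearD, linearZ) /= sk'.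
  by rewrite scalerN scalerA addrA addrK.
set S := gram M U U.
have SE : S = G + (s / 2%:R * (s / 2%:R)) *: (Z^T *m M *m Z) by rewrite /S EU gram_pm.
have ShS : gram M Uh Uh = S.
  by rewrite EUh -scaleNr gram_pm mulrNN SE.
have [[Ss Spd] [_ S1]] := hqs.
have Sp z : 0 <= ip S z z.
  by have [->|/Spd/ltW //] := eqVneq z 0; rewrite ip0l.
have S1' z : ip S z z <= ip 1%:M z z.
  by rewrite -subr_ge0 -ipMB; exact: S1.
have Gp x : 0 <= ip G x x by rewrite /G /gram -ip_mul.
have GleS x : ip G x x <= ip S x x.
  rewrite SE ipMD ipMZ lerDl; apply: mulr_ge0; first by rewrite -expr2 sqr_ge0.
  by rewrite -ip_mul.
pose Nm (mu : R) := 1%:M + (s / 2%:R) *: (mu *: G - K).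
have Npd mu (r : 'rV_N) : lam1 <= mu -> r != 0 -> 0 < (r *m Nm mu *m r^T) 0 0.
  move=> hmu r0; rewrite -{1}[r]trmxK; set x := r^T.
  have x0 : x != 0 by rewrite /x trmx_eq0.
  change (0 < ip (Nm mu) x x); rewrite /Nm ipMD ipMZ ipMB ipMZ.
  have t0 := xtx_gt0 x0; rewrite -ip1 in t0.
  have g1 := GleS x; have g2 := S1' x; have g3 := Gp x.
  have k1 : ip K x x <= lammax * ip G x x.
    have -> : ip K x x = ip M (Ut *m x) (H *m (Ut *m x)).
      by rewrite mulmxA ip_mul /K !mulmxA.
    by rewrite /G /gram -ip_mul; exact: ray2.
  have hA : lammax - lam1 <= `|lam1 - lammax| by rewrite distrC ler_norm.
  have hA0 : 0 <= `|lam1 - lammax| by [].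
  move: hstep hA hA0 hmu k1 g1 g2 g3 t0 hs.
  set A := `|_|; set g := ip G x x; set k := ip K x x; set t := ip 1%:M x x.
  move=> *.
  have h1 : (mu - lammax + A) * g >= 0 by apply: mulr_ge0; lra.
  have h2 : A * g <= A * t by apply: ler_wpM2l => //; lra.
  nra.
have Nunit mu : lam1 <= mu -> Nm mu \in unitmx.
  by move=> h; apply: pd_unit => r; exact: Npd.
pose Tm (X : 'M[R]_(Ng, N)) := X + (s / 2%:R) *: (H *m X *m G - X *m K).
have TmUt : Tm Ut = U by rewrite /Tm EU EZ.
have Tinj X : Tm X = 0 -> X = 0.
  apply: (Tinj_lemma Fu EH) => k; apply: Nunit.
  by case/andP: (abnd k).
pose I := {j : 'I_N & 'I_(d j)}.
pose vv (p : I) := v (tag p) (tagged p).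
have hev' (p : I) : exists av, H *m vv p = av *: vv p := (hev _ _).2.
pose av (p : I) := proj1_sig (constructive_indefinite_description _ (hev' p)).
have Hvv p : H *m vv p = av p *: vv p :=
  proj2_sig (constructive_indefinite_description _ (hev' p)).
have vv0 p : vv p != 0 := (hev _ _).1.
have av1 p : lam1 <= av p.
  by apply: hsm.2; exists (vv p); split; [exact: vv0 | exact: Hvv].
have av0 p : av p <= 0.
  have := hneg (tag p) (tagged p); rewrite -/(vv p) Hvv ipZr mulfK //.
  by apply: lt0r_neq0; exact: Mpd (vv0 p).
pose cf (j : 'I_N) := proj1_sig (constructive_indefinite_description _ (hU j)).
have Ecf j : col j U = \sum_(k < d j) cf j k *: v j k :=
  proj2_sig (constructive_indefinite_description _ (hU j)).
pose rU (p : I) : 'rV[R]_N := cf (tag p) (tagged p) *: delta_mx 0 (tag p).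
have UE : U = \sum_p vv p *m rU p.
  apply/matrixP => i j; rewrite summxE.
  have -> : U i j = col j U i 0 by rewrite mxE.
  rewrite Ecf summxE.
  have -> : \sum_(p : I) (vv p *m rU p) i j =
      \sum_(p : I) (fun j' (k : 'I_(d j')) => v j' k i 0 * (cf j' k * (j' == j)%:R)) (tag p) (tagged p).
    apply: eq_bigr => p _; rewrite !mxE big_ord1 !mxE eqxx /=.
    by rewrite eq_sym.
  rewrite -(@sig_big_dep _ _ _ _ _ xpredT (fun _ => xpredT) (fun j' (k : 'I_(d j')) => v j' k i 0 * (cf j' k * (j' == j)%:R))).
  rewrite [RHS](bigD1 j) //= [X in _ + X]big1 ?addr0; last first.
    by move=> j' /negPf nj; apply: big1 => k _; rewrite nj mulr0 mulr0.
  by apply: eq_bigr => k _; rewrite eqxx mulr1 mxE mulrC.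
pose r (p : I) := rU p *m invmx (Nm (av p)).
pose X0 := \sum_p vv p *m r p.
have Tm_sum (f : I -> 'M[R]_(Ng, N)) : Tm (\sum_p f p) = \sum_p Tm (f p).
  rewrite /Tm mulmx_sumr !mulmx_suml -sumrB scaler_sumr -big_split.
  by [].
have Tm_v p (x : 'rV[R]_N) : Tm (vv p *m x) = vv p *m (x *m Nm (av p)).
  rewrite /Tm /Nm mulmxA Hvv mulmxDr mulmx1 mulmxDr; congr (_ + _).
  rewrite -!scalemxAr mulmxBr mulmxBr -!scalemxAr -!scalemxAl !mulmxA.
  by [].
have TmX0 : Tm X0 = U.
  rewrite /X0 Tm_sum [RHS]UE; apply: eq_bigr => p _.
  by rewrite Tm_v /r mulmxKV //; exact: Nunit (av1 p).
have TmB X Y : Tm (X - Y) = Tm X - Tm Y.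
  by rewrite /Tm !(mulmxBr, mulmxBl) !scalerBr zmod_aux.
have UtE : Ut = X0.
  by apply/eqP; rewrite -subr_eq0; apply/eqP/Tinj; rewrite TmB TmUt TmX0 subrr.
have Uh2 : Uh = 2%:R *: Ut - U.
  apply/matrixP => i j; move/matrixP: (EU) => /(_ i j); move/matrixP: (EUh) => /(_ i j).
  rewrite !mxE => h1 h2; lra.
have UhE : Uh = \sum_p vv p *m (2%:R *: r p - rU p).
  rewrite Uh2 UtE [in LHS]UE /X0 scaler_sumr -sumrB; apply: eq_bigr => p _.
  by rewrite mulmxBr scalemxAr.
split.
  by rewrite /symmx /gram !trmx_mul trmxK Ms mulmxA.
move=> x x0.
change (0 < ip (gram M U1 U1) x x); rewrite /gram -ip_mul.
have [u0|/Mpd //] := eqVneq (U1 *m x) 0.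
exfalso.
pose y := (1%:M - S) *m x.
have hx : Uh *m x = s *: (H *m (Uh *m y)).
  move: u0; rewrite hU1 /gradE ShS mulmxBl -scalemxAl => /eqP; rewrite subr_eq0 => /eqP ->.
  by rewrite /y !mulmxA.
have SS : S *m (1%:M - S) = S - S *m S by rewrite mulmxBr mulmx1.
have h1 : ip M (Uh *m x) (Uh *m y) = ip (S - S *m S) x x.
  by rewrite ip_mul -/(gram M Uh Uh) ShS -SS /y /ip !mulmxA.
have h2 : ip M (Uh *m x) (Uh *m y) <= 0.
  rewrite hx ipZl; apply: mulr_ge0_le0; first exact: ltW.
  rewrite hsa.
  have -> : Uh *m y = \sum_p ((2%:R *: r p - rU p) *m y) 0 0 *: vv p.
    rewrite UhE mulmx_suml; apply: eq_bigr => p _.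
    by rewrite -mulmxA {1}[(_ *m y)]mx11_scalar mul_mx_scalar.
  exact: (neg_span _ Ms Mp hsa Hvv av0).
have S1'' z : 0 <= ip (1%:M - S) z z by exact: S1.
have h3 := psd_SmS Ss Sp S1'' x.
have hq : ip (S - S *m S) x x = 0 by apply: le_anti; rewrite h3 andbT -h1.
have SSs : (S - S *m S)^T = S - S *m S by rewrite linearB /= [(S *m S)^T]trmx_mul !Ss.
have hk := ip_ker SSs (psd_SmS Ss Sp S1'') hq.
have Sy : S *m y = 0 by rewrite /y mulmxA SS.
have y0 : y = 0.
  apply/eqP; apply: contraT => yn; have := Spd y yn.
  by rewrite -mulmxA Sy mulmx0 mxE ltxx.
have : ip S x x = 0.
  by rewrite -ShS /gram -ip_mul hx y0 mulmx0 mulmx0 scaler0 ip0l.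
move=> h0; have h4 : 0 < ip S x x := Spd x x0; by rewrite h0 ltxx in h4.
Qed.
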